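(* Assume the random gather-step setting below. Then for every coordinate $i\in\{1,\dots,d\}$ and every choice of the Byzantine vectors $z^{(j)}=z^{(j)}(X)$ as (arbitrary) functions of the delivering configuration $X$, $$\mathbb{E}\big[\Delta_i(\theta_1,\dots,\theta_h)\big]\le\Big(1-\frac{\rho}{4}\Big)\Delta_i(\lambda_1,\dots,\lambda_h),$$ where the expectation is over $X$.
   Context: Median of reals: for $y_1,\dots,y_q\in\mathbb{R}$ with order statistics $y_{(1)}\le\dots\le y_{(q)}$, $\mathrm{median}=y_{((q+1)/2)}$ if $q$ is odd and $\frac12(y_{(q/2)}+y_{(q/2+1)})$ if $q$ is even; $\mathrm{Median}$ of vectors is applied coordinate-wise. Coordinate-wise diameters: $\Delta_i(v_1,\dots,v_h)=\max_{j,k}|v_j[i]-v_k[i]|$, $\Delta=\sum_i\Delta_i$. Random gather-step setting: integers $f\ge1$, $n$, $h=n-f$, and $q$ with $2f+2\le q\le\lfloor h/2\rfloor$; fixed vectors $\lambda_1,\dots,\lambda_h\in\mathbb{R}^d$ held by the correct servers $1,\dots,h$. Let $S_j=\{s\subset\{1,\dots,h\}\setminus\{j\}:|s|\in\{q-f-1,\dots,q-1\}\}$ and $S=\prod_{j=1}^hS_j$. A delivering configuration $X=(X_1,\dots,X_h)$ is a random element of $S$ with $P(X=s)\ge\rho$ for all $s\in S$, for some $\rho>0$. Given $X$, each correct server $j$ receives arbitrary vectors $z^{(j)}_1,\dots,z^{(j)}_{q-1-|X_j|}\in\mathbb{R}^d$ (possibly depending on $X$) and computes $\theta_j=\mathrm{Median}\big(\lambda_j,(\lambda_k)_{k\in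 X_j},z^{(j)}_1,\dots,z^{(j)}_{q-1-|X_j|}\big)$. *)

(* Defs.v *)
From HB Require Import structures.
From mathcomp Require Import all_boot all_order all_algebra.
Set Implicit Arguments. Unset Strict Implicit. Unset Printing Implicit Defensive.
Import Order.TTheory GRing.Theory Num.Theory.
Local Open Scope ring_scope.

(* Median of a finite list of reals: y_((q+1)/2) if q odd,
   (y_(q/2) + y_(q/2+1))/2 if q even (1-indexed order statistics). *)
Definition median (R : realFieldType) (s : seq R) : R :=
  let t := sort (fun x y : R => x <= y) s in
  let q := size t in
  if odd q then nth 0 t q./2
  else (nth 0 t q./2.-1 + nth 0 t q./2) / 2%:R.

Definition Median (R : realFieldType) (d : nat) (vs : seq 'rV[R]_d) : 'rV[R]_d :=
  \row_(i < d) median [seq (v : 'rV[R]_d) ord0 i | v <- vs].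

Definition diam_i (R : realFieldType) (d h : nat) (v : 'I_h -> 'rV[R]_d) (i : 'I_d) : R :=
  \big[Num.max/0]_(j < h) \big[Num.max/0]_(k < h) `|v j ord0 i - v k ord0 i|.

Definition valid_config (h q f : nat) (s : {ffun 'I_h -> {set 'I_h}}) : bool :=
  [forall j, (j \notin s j) && ((q - f - 1)%N <= #|s j| <= q - 1)%N].

(* theta_j for configuration s, where server j receives q-1-|s_j| Byzantine
   vectors z s j 0, ..., z s j (q-2-|s_j|). *)
Definition theta (R : realFieldType) (d h q : nat) (lam : 'I_h -> 'rV[R]_d)
    (z : {ffun 'I_h -> {set 'I_h}} -> 'I_h -> nat -> 'rV[R]_d)
    (s : {ffun 'I_h -> {set 'I_h}}) (j : 'I_h) : 'rV[R]_d :=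
  Median (lam j :: [seq lam k | k <- enum (s j)]
                ++ [seq z s j m | m <- iota 0 (q - 1 - #|s j|)]).
Arguments valid_config h q f s : clear implicits.

(* Main.v *)
Require Import Defs.
From HB Require Import structures.
From mathcomp Require Import all_boot all_order all_algebra.
From mathcomp Require Import zify ring lra.
Import Order.TTheory GRing.Theory Num.Theory.
Local Open Scope ring_scope.




Lemma nth_ge {R : realFieldType} (t : seq R) (lo : R) k : sorted <=%R t -> (k < size t)%N ->
  (size t - k <= count (fun x : R => (lo <= x)%R) t)%N -> lo <= nth 0 t k.
Proof.
move=> st kt hc; rewrite leNgt; apply/negP => hlt.
have h0 : count (fun x : R => (lo <= x)%R) (take k.+1 t) = 0%N.
  rewrite (eq_in_count (a2 := pred0)) ?count_pred0 // => x /(nthP 0) [i].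
  rewrite size_take => hi <-; rewrite nth_take; last by case: ifP hi; lia.
  have ik : (i <= k)%N by case: ifP hi; lia.
  apply/negbTE; rewrite -ltNge; apply: le_lt_trans hlt.
  apply: (sorted_leq_nth le_trans lexx 0 st) => //; rewrite ?inE /=; case: ifP hi => _; lia.
have := count_size (fun x : R => (lo <= x)%R) (drop k.+1 t).
have E : count (fun x : R => (lo <= x)%R) t = (count (fun x : R => (lo <= x)%R) (take k.+1 t) + count (fun x : R => (lo <= x)%R) (drop k.+1 t))%N by rewrite -count_cat cat_take_drop.
move: hc; rewrite E h0 size_drop; lia.
Qed.

Lemma nth_le {R : realFieldType} (t : seq R) (hi : R) k : sorted <=%R t -> (k < size t)%N ->
  (k.+1 <= count (fun x : R => (x <= hi)%R) t)%N -> nth 0 t k <= hi.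
Proof.
move=> st kt hc; rewrite leNgt; apply/negP => hlt.
have h0 : count (fun x : R => (x <= hi)%R) (drop k t) = 0%N.
  rewrite (eq_in_count (a2 := pred0)) ?count_pred0 // => x /(nthP 0) [i].
  rewrite size_drop => hi' <-; rewrite nth_drop.
  apply/negbTE; rewrite -ltNge; apply: lt_le_trans hlt _.
  apply: (sorted_leq_nth le_trans lexx 0 st) => //; rewrite ?inE /=.
  - by rewrite -ltn_subRL.
  - exact: leq_addr.
have := count_size (fun x : R => (x <= hi)%R) (take k t).
have E : count (fun x : R => (x <= hi)%R) t = (count (fun x : R => (x <= hi)%R) (take k t) + count (fun x : R => (x <= hi)%R) (drop k t))%N by rewrite -count_cat cat_take_drop.
move: hc; rewrite E h0 size_take; case: ifP; lia.
Qed.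

Lemma median_ge {R : realFieldType} (s : seq R) (lo : R) :
  ((size s)./2.+1 <= count (fun x : R => (lo <= x)%R) s)%N -> lo <= median s.
Proof.
rewrite /median -(count_sort <=%R) -(size_sort <=%R).
have st := sort_sorted (@le_total _ R) s.
set t := sort _ s => hc.
have hs := count_size (fun x : R => (lo <= x)%R) t.
rewrite -!divn2 in hc *.
set m := size t in hc hs *.
set c := count _ t in hc hs *.
have hm : m = size t by [].
case: ifP => od.
  apply: nth_ge => //; rewrite -hm; lia.
have h1 : lo <= nth 0 t ((size t) %/ 2).-1 by apply: nth_ge => //; rewrite -hm; lia.
have h2 : lo <= nth 0 t ((size t) %/ 2) by apply: nth_ge => //; rewrite -hm; lia.
rewrite ler_pdivlMr ?ltr0n //; lra.
Qed.

Lemma median_le {R : realFieldType} (s : seq R) (hi : R) :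
  ((size s)./2.+1 <= count (fun x : R => (x <= hi)%R) s)%N -> median s <= hi.
Proof.
rewrite /median -(count_sort <=%R) -(size_sort <=%R).
have st := sort_sorted (@le_total _ R) s.
set t := sort _ s => hc.
have hs := count_size (fun x : R => (x <= hi)%R) t.
rewrite -!divn2 in hc *.
set m := size t in hc hs *.
set c := count _ t in hc hs *.
have hm : m = size t by [].
case: ifP => od.
  apply: nth_le => //; rewrite -hm; lia.
have h1 : nth 0 t ((size t) %/ 2).-1 <= hi by apply: nth_le => //; rewrite -hm; lia.
have h2 : nth 0 t ((size t) %/ 2) <= hi by apply: nth_le => //; rewrite -hm; lia.
rewrite ler_pdivrMr ?ltr0n //; lra.
Qed.


Definition tl (R : realFieldType) d h q (lam : 'I_h -> 'rV[R]_d)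
    (z : {ffun 'I_h -> {set 'I_h}} -> 'I_h -> nat -> 'rV[R]_d)
    (s : {ffun 'I_h -> {set 'I_h}}) (j : 'I_h) (i : 'I_d) : seq R :=
  lam j ord0 i :: [seq lam k ord0 i | k <- enum (s j)]
    ++ [seq z s j m ord0 i | m <- iota 0 (q - 1 - #|s j|)].
Arguments tl {R d h} q lam z s j i.

Lemma theta_tl (R : realFieldType) d h q (lam : 'I_h -> 'rV[R]_d) z (s : {ffun 'I_h -> {set 'I_h}}) (j : 'I_h) (i : 'I_d) :
  theta q lam z s j ord0 i = median (tl q lam z s j i).
Proof. by rewrite /theta /Median mxE /= map_cat -!map_comp. Qed.

Lemma size_tl (R : realFieldType) d h q (lam : 'I_h -> 'rV[R]_d) z (s : {ffun 'I_h -> {set 'I_h}}) (j : 'I_h) (i : 'I_d) :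
  (0 < q)%N -> (#|s j| <= q - 1)%N -> size (tl q lam z s j i) = q.
Proof.
rewrite /tl /= size_cat !size_map size_iota -cardE.
set c := #|s j|; move=> hq hc; lia.
Qed.

Lemma count_tl (R : realFieldType) d h q (lam : 'I_h -> 'rV[R]_d) z (s : {ffun 'I_h -> {set 'I_h}}) (j : 'I_h) (i : 'I_d) (p : pred R) :
  (p (lam j ord0 i) + count (fun k => p (lam k ord0 i)) (enum (s j)) <= count p (tl q lam z s j i))%N.
Proof. by rewrite /tl /= count_cat count_map addnA leq_addr. Qed.

Lemma diam_le (R : realFieldType) d h (v : 'I_h -> 'rV[R]_d) i (lo hi : R) :
  lo <= hi -> (forall j, lo <= v j ord0 i <= hi) -> diam_i v i <= hi - lo.
Proof.
move=> lh H; apply: bigmax_le; first lra.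
move=> j _; apply: bigmax_le; first lra.
move=> k _; rewrite ler_norml.
by case/andP: (H j) => ??; case/andP: (H k) => ??; apply/andP; split; lra.
Qed.

Lemma diam_ge (R : realFieldType) d h (v : 'I_h -> 'rV[R]_d) i a b :
  v b ord0 i - v a ord0 i <= diam_i v i.
Proof.
apply: le_trans (le_bigmax _ _ b); apply: le_trans (le_bigmax _ _ a).
exact: ler_norm.
Qed.

Lemma exists_sub (T : finType) (L : {set T}) m :
  (m <= #|L|)%N -> exists A : {set T}, A \subset L /\ #|A| = m.
Proof.
move=> hm; exists [set x in take m (enum L)]; split.
  by apply/subsetP => x; rewrite inE => /mem_take; rewrite mem_enum.
rewrite cardsE; move/card_uniqP: (take_uniq m (enum_uniq (mem L))) => ->.
by rewrite size_take -cardE; case: ltngtP hm => //; lia.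
Qed.
Theorem mainTheorem5 (R : realFieldType) (d f n q : nat)
    (hf : (1 <= f)%N) (hq1 : (2 * f + 2 <= q)%N) (hq2 : (q <= (n - f) %/ 2)%N)
    (lam : 'I_(n - f) -> 'rV[R]_d)
    (P : {ffun 'I_(n - f) -> {set 'I_(n - f)}} -> R) (rho : R)
    (hrho : 0 < rho)
    (hP0 : forall s, 0 <= P s)
    (hPS : forall s, ~~ valid_config (n - f) q f s -> P s = 0)
    (hP1 : \sum_s P s = 1)
    (hPrho : forall s, valid_config (n - f) q f s -> rho <= P s)
    (z : {ffun 'I_(n - f) -> {set 'I_(n - f)}} -> 'I_(n - f) -> nat -> 'rV[R]_d)
    (i : 'I_d) :
  \sum_(s | valid_config (n - f) q f s)
      P s * diam_i (theta q lam z s) i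
  <= (1 - rho / 4%:R) * diam_i lam i.
Proof.
have hq4 : (4 <= q)%N by lia.
have q0 : (0 < q)%N by lia.
have hh : (2 * q <= n - f)%N by move: hq2; rewrite leq_divRL //; lia.
have h0 : (0 < n - f)%N by lia.
pose j0 := Ordinal h0.
case: (@arg_minP _ _ _ j0 xpredT (fun k => lam k ord0 i) isT) => jlo _ hlo.
case: (@arg_maxP _ _ _ j0 xpredT (fun k => lam k ord0 i) isT) => jhi _ hhi.
set lo := lam jlo ord0 i in hlo *; set hi := lam jhi ord0 i in hhi *.
have hF : forall k, lo <= lam k ord0 i <= hi by move=> k; apply/andP; split; [apply: hlo | apply: hhi].
have lohi : lo <= hi by have /andP[] := hF jlo.
have hD : diam_i lam i = hi - lo.
  apply/le_anti/andP; split; [exact: diam_le | exact: diam_ge].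
have genj : forall s j, valid_config (n - f) q f s ->
    lo <= theta q lam z s j ord0 i <= hi.
  move=> s j /forallP hv; rewrite theta_tl.
  have /andP [hj /andP [c1 c2]] := hv j.
  have hs := @size_tl _ _ _ q lam z s j i q0 c2.
  have cnt : forall p : pred R, (forall k, p (lam k ord0 i)) ->
      ((size (tl q lam z s j i))./2.+1 <= count p (tl q lam z s j i))%N.
    move=> p hp; apply: leq_trans (@count_tl _ _ _ q lam z s j i p).
    rewrite hp (eq_count (a2 := predT)) ?count_predT -?cardE //.
    rewrite hs -divn2; move: c1; set c := #|s j|; lia.
  apply/andP; split; [apply: median_ge | apply: median_le]; apply: cnt => k;
    by have /andP[] := hF k.
have gen : forall s, valid_config (n - f) q f s ->
    diam_i (theta q lam z s) i <= hi - lo.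
  by move=> s hv; apply: diam_le => // j; apply: genj.
set mid := (lo + hi) / 2%:R.
have [L [hL hLp]] : exists L : {set 'I_(n - f)}, (q - 1 <= #|L|)%N /\
    ((forall k, k \in L -> lam k ord0 i <= mid) \/
     (forall k, k \in L -> mid <= lam k ord0 i)).
  case: (leqP (q - 1) #|[set k | lam k ord0 i <= mid]|) => c.
    by exists [set k | lam k ord0 i <= mid]; split => //; left => k; rewrite inE.
  exists (~: [set k | lam k ord0 i <= mid]); split.
    move: c; set S := [set k | _]; have := cardsC S; rewrite card_ord.
    set a := #|S|; set b := #|~: S|; lia.
  by right => k; rewrite !inE -ltNge => /ltW.
have [A [hAL hAc]] := exists_sub _ _ _ hL.
pose s' : {ffun 'I_(n - f) -> {set 'I_(n - f)}} := [ffun j => A :\ j].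
have vs' : valid_config (n - f) q f s'.
  apply/forallP => j; rewrite ffunE setD11 /=.
  have := cardsD1 j A; rewrite hAc; set c := #|A :\ j|; case: (j \in A) => /= e; apply/andP; split; lia.
have cnt : forall p : pred R, (forall k, k \in A -> p (lam k ord0 i)) ->
    forall j, ((size (tl q lam z s' j i))./2.+1 <= count p (tl q lam z s' j i))%N.
  move=> p hp j; apply: leq_trans (@count_tl _ _ _ q lam z s' j i p).
  have hs := @size_tl _ _ _ q lam z s' j i q0.
  rewrite hs; last by rewrite ffunE (leq_trans (subset_leq_card (subD1set _ _))) ?hAc.
  rewrite (eq_in_count (a2 := predT)) ?count_predT -?cardE; last first.
    by move=> k; rewrite mem_enum ffunE => /setD1P [_ /hp].
  rewrite ffunE; have := cardsD1 j A; rewrite hAc -divn2; set c := #|A :\ j|.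
  case: (boolP (j \in A)) => jA.
    by rewrite (hp _ jA) /=; lia.
  by rewrite /=; lia.
have good : diam_i (theta q lam z s') i <= (hi - lo) / 2%:R.
  case: hLp => hp.
  - apply: le_trans (_ : mid - lo <= _); last by rewrite /mid; lra.
    apply: diam_le; first by rewrite /mid; lra.
    move=> j; have /andP [g1 _] := genj s' j vs'; rewrite g1 /= theta_tl.
    apply: median_le; apply: cnt => k kA; apply: hp; exact: (subsetP hAL).
  - apply: le_trans (_ : hi - mid <= _); last by rewrite /mid; lra.
    apply: diam_le; first by rewrite /mid; lra.
    move=> j; have /andP [_ g2] := genj s' j vs'; rewrite g2 andbT theta_tl.
    apply: median_ge; apply: cnt => k kA; apply: hp; exact: (subsetP hAL).
have hPs : \sum_(s | valid_config (n - f) q f s) P s = 1.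
  rewrite -hP1 [RHS](bigID (valid_config (n - f) q f)) /=.
  by rewrite [X in _ = _ + X]big1 ?addr0 // => s /hPS.
rewrite hD (bigD1 s') //=.
rewrite (bigD1 s') //= in hPs.
set G := diam_i (theta q lam z s') i in good *.
have hrest : \sum_(s | valid_config (n - f) q f s && (s != s'))
    P s * diam_i (theta q lam z s) i <=
    \sum_(s | valid_config (n - f) q f s && (s != s')) P s * (hi - lo).
  apply: ler_sum => s /andP [vs _]; apply: ler_wpM2l; [exact: hP0 | exact: gen].
rewrite -mulr_suml in hrest.
set S1 := \sum_(s | _ && _) P s * diam_i _ i in hrest *.
set S2 := \sum_(s | _ && _) P s in hPs hrest.
have hp := hPrho s' vs'; have hp0 := hP0 s'.
have hD0 : 0 <= hi - lo by lra.
have h1 : P s' * G <= P s' * ((hi - lo) / 2%:R) by apply: ler_wpM2l.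
have h2 : 0 <= (P s' - rho) * (hi - lo) by apply: mulr_ge0; lra.
have h3 : S2 = 1 - P s' by lra.
rewrite h3 in hrest.
nra.
Qed.
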